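(* Let $M$ be the star matrix of a partition of the hypercube ${\bf Z}_q^n$ into subcubes all of the same dimension, let $T$ be a transfractal submatrix of $M$, let $t$ be a column of $M$ belonging to $T$ and let $s$ be a column of $M$ not belonging to $T$. Then either there is no row in which both $t$ and $s$ contain elements of ${\bf Z}_q$, or every row in which $t$ contains an element of ${\bf Z}_q$ also contains an element of ${\bf Z}_q$ in column $s$; and in the latter case there is a single $a\in{\bf Z}_q$ such that column $s$ contains $a$ in every row in which column $t$ contains an element of ${\bf Z}_q$.
   Context: A subcube of ${\bf Z}_q^n$ is obtained by fixing some coordinates and letting the others run through ${\bf Z}_q$; its dimension is the number of free coordinates, and its star pattern is the vector over ${\bf Z}_q\cup\{*\}$ with the fixed values in fixed coordinates and $*$ in free ones. The star matrix of a partition of ${\bf Z}_q^n$ into subcubes is the matrix whose rows are the star patterns of the subcubes. Fractal matrices: $M_{q,0}$ has one row and zero columns; for $m\ge1$, $M_{q,m}$ consists of $q$ horizontal blocks indexed by $a=0,\dots,q-1$, each with $q^{m-1}$ rows; its first column has entry $a$ in every row of block $a$; its remaining columns are divided into $q$ vertical stripes of width equal to the number of columns of $M_{q,m-1}$, and in block $a$ the $a$-th stripe is a copy of $M_{q,m-1}$ while other stripes of block $a$ are all $*$. A fractal matrix is any matrix obtained from some $M_{q,m}$ ($m\ge1$) by permuting rows and columns. A submatrix $T$ of $M$ (a set of rows and a set of columns, not necessarily consecutive) is a transfractal if $T$ is a fractal matrix and each column of $M$ used by $T$ contains only $*$ in all rows of $M$ not used by $T$. *)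

(* Defs.v *)
From mathcomp Require Import all_boot.
Set Implicit Arguments. Unset Strict Implicit. Unset Printing Implicit Defensive.

(* Z_q is represented by 'I_q; an entry of a star pattern is an
   [option 'I_q], with [None] playing the role of the star [*]. *)

Definition in_subcube (q n : nat) (p : 'I_n -> option 'I_q) (x : 'I_n -> 'I_q) : Prop :=
  forall (j : 'I_n) (a : 'I_q), p j = Some a -> x j = a.

Definition subcube_dim (q n : nat) (p : 'I_n -> option 'I_q) : nat :=
  #|[set j : 'I_n | p j == None]|.

Definition is_partition_star_matrix (q n N : nat) (M : 'I_N -> 'I_n -> option 'I_q) : Prop :=
  forall x : 'I_n -> 'I_q, exists! i : 'I_N, in_subcube (M i) x.

Definition equal_dims (q n N : nat) (M : 'I_N -> 'I_n -> option 'I_q) : Prop :=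
  forall i i' : 'I_N, subcube_dim (M i) = subcube_dim (M i').

(* Rows of M_{q,m} are indexed by
   words w of length m over Z_q (the first letter is the block index a,
   the rest indexes the row inside the copy of M_{q,m-1}); columns are
   indexed by words u of length < m (the empty word is the first column,
   a word b :: u' is column u' of the b-th stripe).  The recursion below is
   exactly the recursive definition: first column carries the block index a;
   in block a, stripe a is a copy of M_{q,m-1} and the other stripes are *. *)
Fixpoint fractal_entry (q : nat) (w u : seq 'I_q) : option 'I_q :=
  match w, u with
  | a :: _, [::] => Some a
  | a :: w', b :: u' => if a == b then fractal_entry w' u' else None
  | [::], _ => None
  end.

(* The submatrix of M with row set R and column set C is a fractal matrix:
   it equals M_{q,m} (m >= 1) up to permutation of rows and columns, i.e.
   there are bijections f : R -> rows of M_{q,m} and g : C -> columns of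
   M_{q,m} matching all entries. *)
Definition is_fractal_submatrix (q n N : nat) (M : 'I_N -> 'I_n -> option 'I_q)
    (R : {set 'I_N}) (C : {set 'I_n}) : Prop :=
  exists (m : nat) (f : 'I_N -> seq 'I_q) (g : 'I_n -> seq 'I_q),
    1 <= m /\
    {in R, forall i, size (f i) = m} /\
    {in R &, injective f} /\
    (forall w : seq 'I_q, size w = m -> exists2 i, i \in R & f i = w) /\
    {in C, forall j, size (g j) < m} /\
    {in C &, injective g} /\
    (forall u : seq 'I_q, size u < m -> exists2 j, j \in C & g j = u) /\
    {in R & C, forall i j, M i j = fractal_entry (f i) (g j)}.

Definition is_transfractal (q n N : nat) (M : 'I_N -> 'I_n -> option 'I_q)
    (R : {set 'I_N}) (C : {set 'I_n}) : Prop :=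
  is_fractal_submatrix M R C /\
  (forall (i : 'I_N) (j : 'I_n), j \in C -> i \notin R -> M i j = None).

(* Main.v *)
Require Import Defs.
From mathcomp Require Import all_boot.

Lemma fractal_eq (q : nat) (w1 w2 : seq 'I_q) : size w1 = size w2 ->
  (forall u, size u < size w1 -> forall a b, fractal_entry w1 u = Some a ->
     fractal_entry w2 u = Some b -> a = b) -> w1 = w2.
Proof.
elim: w1 w2 => [|a w1 IH] [|b w2] //= [Hs] H.
have ab : a = b by apply: (H [::]).
subst b; congr (_ :: _); apply: IH => // u Hu a' b' E1 E2.
by apply: (H (a :: u)) => //=; rewrite eqxx.
Qed.

Lemma key q n N (M : 'I_N -> 'I_n -> option 'I_q) (R : {set 'I_N}) (C : {set 'I_n})
  m (f : 'I_N -> seq 'I_q) (g : 'I_n -> seq 'I_q) (z : 'I_n -> 'I_q) i k :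
  is_partition_star_matrix M ->
  (forall i j, j \in C -> i \notin R -> M i j = None) ->
  {in R &, injective f} ->
  (forall u : seq 'I_q, size u < m -> exists2 j, j \in C & g j = u) ->
  {in R & C, forall i j, M i j = fractal_entry (f i) (g j)} ->
  {in R, forall i, size (f i) = m} ->
  i \in R -> k \in R -> in_subcube (M i) z ->
  in_subcube (M k) (fun j => if j \in C then odflt (z j) (M k j) else z j).
Proof.
move=> HP HN Hinj Hsurj HE Hsz iR kR Hz.
set z' := fun j => if j \in C then odflt (z j) (M k j) else z j.
have [r [Hr Hu]] := HP z'.
have rR : r \in R.
  apply/negPn/negP => rN.
  have Hrz : in_subcube (M r) z.
    move=> j a E; case jC: (j \in C); first by rewrite HN ?jC in E.
    by have := Hr j a E; rewrite /z' jC.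
  have [i0 [Hi0 Hu0]] := HP z.
  have e1 := Hu0 _ Hrz; have e2 := Hu0 _ Hz.
  by move: rN; rewrite -e1 e2 iR.
have frk : f r = f k.
  apply: fractal_eq; first by rewrite !Hsz.
  move=> u; rewrite Hsz // => Hum a b E1 E2.
  have [j jC gj] := Hsurj u Hum.
  have E1' : M r j = Some a by rewrite HE // gj.
  have E2' : M k j = Some b by rewrite HE // gj.
  have := Hr j a E1'; rewrite /z' jC E2' /= => ->; done.
have rk : r = k by apply: Hinj.
by rewrite -rk.
Qed.

Theorem corollary1 (q n N : nat) (M : 'I_N -> 'I_n -> option 'I_q)
    (R : {set 'I_N}) (C : {set 'I_n}) (t s : 'I_n) :
  is_partition_star_matrix M ->
  equal_dims M ->
  is_transfractal M R C ->
  t \in C -> s \notin C ->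
  (forall i : 'I_N, ~ (M i t <> None /\ M i s <> None)) \/
  ((forall i : 'I_N, M i t <> None -> M i s <> None) /\
   exists a : 'I_q, forall i : 'I_N, M i t <> None -> M i s = Some a).
Proof.
move=> HP _ [[m [f [g [m1 [Hsz [Hinj [_ [_ [_ [Hsurj HE]]]]]]]]]] HN] tC sC.
have inR : forall i, M i t <> None -> i \in R.
  move=> i Hi; apply/negPn/negP => iN; by apply: Hi; apply: HN.
have half : 1 < q -> forall i k b, i \in R -> k \in R -> M k s = Some b -> M i s = Some b.
  move=> q2 i k b iR kR Eb.
  have Hz : forall e : 'I_q, (fun j => if M i j is Some a then a else e) s = b.
    move=> e.
    have Hk := @key q n N M R C m f g (fun j => if M i j is Some a then a else e) i k HP HN Hinj Hsurj HE Hsz iR kR.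
    have /Hk H : in_subcube (M i) (fun j => if M i j is Some a then a else e).
      by move=> j a /= ->.
    by have := H s b Eb; rewrite (negbTE sC).
  case Ei: (M i s) => [a|].
    by have := Hz b; rewrite /= Ei => ->.
  have e0 := Hz (Ordinal (ltnW q2)); have e1 := Hz (Ordinal q2).
  by move: e0 e1; rewrite /= Ei => <- /(congr1 val).
have same : forall i k, i \in R -> k \in R -> M i s = M k s.
  move=> i k iR kR.
  case: (leqP q 1) => [q1|q2].
    suff -> : i = k by [].
    apply: Hinj => //.
    have : size (f i) = size (f k) by rewrite !Hsz.
    elim: (f i) (f k) => [|a w IH] [|b w'] //= [Hs].
    congr (_ :: _); last exact: IH.
    apply: val_inj; move: (leq_trans (ltn_ord a) q1) (leq_trans (ltn_ord b) q1).
    by rewrite !ltnS !leqn0 => /eqP ha /eqP hb; rewrite /= ha hb.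
  case Ek: (M k s) => [b|]; first exact: half Ek.
  case Ei: (M i s) => [a|] //.
  by rewrite (half q2 k i a) in Ek.
case: (pickP (fun i => (i \in R) && (M i s != None))) => [i0 /andP [i0R /eqP]|H0].
  case Ei0: (M i0 s) => [a|] // _.
  right; split.
    by move=> i /inR iR; rewrite (same i i0) // Ei0.
  by exists a => i /inR iR; rewrite (same i i0).
left => i [/inR iR]; have := H0 i; rewrite iR /= => /negbFE/eqP; done.
Qed.
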